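(* Let $X$ be a locally compact Hausdorff space, let $\mathcal H = \{H_x\}_{x \in X}$ be a continuous field of Hilbert spaces over $X$, and let $\mathcal M = C_0(X, \mathcal H)$ be the Hilbert $C_0(X)$-module of its continuous sections vanishing at infinity. Let $\mathcal N \subset \mathcal M$ be a closed submodule and for $x \in X$ let $L_x = \overline{\{ n(x) \mid n \in \mathcal N\}} \subset H_x$. Then $\mathcal N$ is an essential submodule of $\mathcal M$ if and only if for every $m \in \mathcal M$ the set $Y_m = \{ x \in X \mid m(x) \notin L_x \}$ is nowhere dense in $X$.
   Context: $\mathcal M$ carries the $C_0(X)$-valued inner product $\langle m, m'\rangle(x) = \langle m(x), m'(x)\rangle_{H_x}$ and the right action $(ma)(x) = m(x)a(x)$. A closed submodule $\mathcal N \subset \mathcal M$ is essential if for every nonzero (not necessarily closed) submodule $\mathcal K \subset \mathcal M$ (a linear subspace with $\mathcal K\, C_0(X) \subset \mathcal K$) one has $\mathcal N \cap \mathcal K \neq \{0\}$. *)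

(* Defs.v *)
From HB Require Import structures.
From mathcomp Require Import all_boot all_order all_algebra.
From mathcomp Require Import all_classical all_reals all_analysis.
From mathcomp Require Import complex.
Set Implicit Arguments. Unset Strict Implicit. Unset Printing Implicit Defensive.
Import Order.TTheory GRing.Theory Num.Theory.
Import numFieldNormedType.Exports.
Local Open Scope classical_set_scope.
Local Open Scope ring_scope.

Record hilbert (R : realType) := Hilbert {
  hcarrier :> lmodType R[i];
  hip : hcarrier -> hcarrier -> R[i];
  (* inner product: linear in the first, conjugate-linear in the second variable *)
  hip_linear : forall (a : R[i]) (u v w : hcarrier),
      hip (a *: u + v) w = a * hip u w + hip v w;
  hip_conj : forall u v : hcarrier, hip u v = (hip v u)^*;
  hip_ge0 : forall u : hcarrier, 0 <= hip u u;
  hip_eq0 : forall u : hcarrier, hip u u = 0 -> u = 0;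
  hip_complete : forall s : nat -> hcarrier,
      (forall e : R, 0 < e -> exists N : nat, forall m n : nat, (N <= m)%N -> (N <= n)%N ->
          Num.sqrt (complex.Re (hip (s m - s n) (s m - s n))) < e) ->
      exists l : hcarrier, forall e : R, 0 < e -> exists N : nat, forall n : nat, (N <= n)%N ->
          Num.sqrt (complex.Re (hip (s n - l) (s n - l))) < e
}.

Definition hnorm (R : realType) (H : hilbert R) (u : H) : R :=
  Num.sqrt (complex.Re (hip u u)).

Record cfield (R : realType) (X : topologicalType) := CField {
  fib : X -> hilbert R;
  csec : set (forall x, fib x);
  csec_zero : csec (fun x => 0);
  csec_add : forall s t, csec s -> csec t -> csec (fun x => s x + t x);
  csec_scale : forall (a : R[i]) s, csec s -> csec (fun x => a *: s x);
  csec_dense : forall (x : X) (v : fib x) (e : R), 0 < e ->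
      exists2 s, csec s & hnorm (s x - v) < e;
  csec_normcont : forall s, csec s -> continuous ((fun x => hnorm (s x)) : X -> R);
  csec_local : forall s : (forall x, fib x),
      (forall (x : X) (e : R), 0 < e -> exists2 t, csec t &
          \forall y \near x, hnorm (s y - t y) < e) -> csec s
}.

Definition vanish_at_infty (R : realType) (X : topologicalType) (f : X -> R) : Prop :=
  forall e : R, 0 < e -> exists2 K : set X, compact K & forall x, ~ K x -> f x < e.

(* C_0(X) : continuous complex-valued functions vanishing at infinity
   (continuity of X -> C is continuity of real and imaginary parts;
    the modulus of z is Re `|z|) *)
Definition C0 (R : realType) (X : topologicalType) : set (X -> R[i]) :=
  [set a | continuous ((fun x => complex.Re (a x)) : X -> R) /\ continuous ((fun x => complex.Im (a x)) : X -> R) /\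
           vanish_at_infty (fun x => complex.Re `|a x|)].
Arguments C0 : clear implicits.

Definition C0sec (R : realType) (X : topologicalType) (F : cfield R X)
  : set (forall x, fib F x) :=
  [set m | @csec _ _ F m /\ vanish_at_infty (fun x => hnorm (m x))].
Arguments C0sec {R X} F.

Definition submodule (R : realType) (X : topologicalType) (F : cfield R X)
  (K : set (forall x, fib F x)) : Prop :=
  [/\ K `<=` C0sec F,
      K (fun x => 0),
      (forall m n, K m -> K n -> K (fun x => m x + n x)),
      (forall (c : R[i]) m, K m -> K (fun x => c *: m x)) &
      (forall m a, K m -> C0 R X a -> K (fun x => a x *: m x))].

Definition closed_submodule (R : realType) (X : topologicalType) (F : cfield R X)
  (N : set (forall x, fib F x)) : Prop :=
  submodule N /\
  (forall m, C0sec F m ->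
     (forall e : R, 0 < e -> exists2 n, N n & forall x, hnorm (m x - n x) <= e) ->
     N m).

Definition essential (R : realType) (X : topologicalType) (F : cfield R X)
  (N : set (forall x, fib F x)) : Prop :=
  forall K, submodule K -> (exists2 k, K k & exists x, k x != 0) ->
    exists k, [/\ N k, K k & exists x, k x != 0].

Definition fiber_closure (R : realType) (X : topologicalType) (F : cfield R X)
  (N : set (forall x, fib F x)) (x : X) : set (fib F x) :=
  [set v | forall e : R, 0 < e -> exists2 n, N n & hnorm (n x - v) < e].
Arguments fiber_closure {R X F} N x.

Definition nowhere_dense (X : topologicalType) (Y : set X) : Prop :=
  interior (closure Y) = set0.

(* Main.v *)
Require Import Defs.
From HB Require Import structures.
From mathcomp Require Import all_boot all_order all_algebra.
From mathcomp Require Import all_classical all_reals all_analysis.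
From mathcomp Require Import complex.
From mathcomp Require Import ring lra.
Import Order.TTheory GRing.Theory Num.Theory.
Import numFieldNormedType.Exports.
Local Open Scope classical_set_scope.
Local Open Scope ring_scope.
Set Implicit Arguments. Unset Strict Implicit. Unset Printing Implicit Defensive.

Lemma conjE (R : realType) (z : R[i]) : Num.conj z = conjc z.
Proof. by []. Qed.

Lemma hip0l (R : realType) (H : hilbert R) (w : H) : hip 0 w = 0.
Proof.
have := hip_linear 1 (0 : H) 0 w; rewrite scale1r addr0 mul1r => h.
by apply: (@addrI _ (hip 0 w)); rewrite addr0 -h.
Qed.

Lemma hipD (R : realType) (H : hilbert R) (u v w : H) :
  hip (u + v) w = hip u w + hip v w.
Proof. by have := hip_linear 1 u v w; rewrite scale1r mul1r. Qed.

Lemma hipZ (R : realType) (H : hilbert R) (a : R[i]) (u w : H) :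
  hip (a *: u) w = a * hip u w.
Proof. by have := hip_linear a u 0 w; rewrite addr0 hip0l addr0. Qed.

Lemma hip0r (R : realType) (H : hilbert R) (w : H) : hip w 0 = 0.
Proof. by rewrite hip_conj hip0l conjE conjc0. Qed.

Lemma hipDr (R : realType) (H : hilbert R) (u v w : H) :
  hip w (u + v) = hip w u + hip w v.
Proof. by rewrite [LHS]hip_conj hipD rmorphD [hip w u]hip_conj [hip w v]hip_conj. Qed.

Lemma hipZr (R : realType) (H : hilbert R) (a : R[i]) (u w : H) :
  hip w (a *: u) = conjc a * hip w u.
Proof. by rewrite [LHS]hip_conj hipZ rmorphM [hip w u]hip_conj conjE. Qed.

Definition Qf (R : realType) (H : hilbert R) (u : H) : R := complex.Re (hip u u).
Definition Bf (R : realType) (H : hilbert R) (u v : H) : R := complex.Re (hip u v).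

Lemma hip_real (R : realType) (H : hilbert R) (u : H) : hip u u = ((Qf u)%:C)%C.
Proof.
rewrite /Qf; have := hip_ge0 u; case: (hip u u) => a b.
by rewrite lecE /= => /andP[/eqP -> _].
Qed.

Lemma Qf_ge0 (R : realType) (H : hilbert R) (u : H) : 0 <= Qf u.
Proof. by have := hip_ge0 u; rewrite hip_real lecR. Qed.

Lemma Qf_eq0 (R : realType) (H : hilbert R) (u : H) : Qf u = 0 -> u = 0.
Proof. by move=> h; apply: hip_eq0; rewrite hip_real h. Qed.

Lemma BfC (R : realType) (H : hilbert R) (u v : H) : Bf u v = Bf v u.
Proof. by rewrite /Bf hip_conj conjE; case: (hip v u). Qed.

Lemma Qf_expand (R : realType) (H : hilbert R) (u v : H) (t : R) :
  Qf (u + ((t%:C)%C) *: v) = Qf u + 2 * t * Bf u v + t ^+ 2 * Qf v.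
Proof.
rewrite /Qf /Bf hipD !hipDr !hipZ !hipZr.
rewrite (hip_real u) (hip_real v) [hip v u]hip_conj conjE.
rewrite /Qf; case: (hip u v) => a b /=. by simpc; ring.
Qed.

Lemma CSineq (R : realType) (H : hilbert R) (u v : H) :
  Bf u v ^+ 2 <= Qf u * Qf v.
Proof.
have [Q0|Qn0] := eqVneq (Qf v) 0.
  have -> : v = 0 by exact: Qf_eq0.
  by rewrite /Bf hip0r /= expr0n /= mulr_ge0 // Qf_ge0.
have Qp : 0 < Qf v by rewrite lt_def Qn0 Qf_ge0.
have := Qf_ge0 (u + ((- (Bf u v / Qf v))%:C)%C *: v).
rewrite Qf_expand.
have -> : Qf u + 2 * - (Bf u v / Qf v) * Bf u v + (- (Bf u v / Qf v)) ^+ 2 * Qf v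
   = Qf u - Bf u v ^+ 2 / Qf v by field; rewrite Qn0.
rewrite subr_ge0 ler_pdivrMr //.
Qed.

Lemma hnorm_ge0 (R : realType) (H : hilbert R) (u : H) : 0 <= hnorm u.
Proof. exact: sqrtr_ge0. Qed.

Lemma hnormE (R : realType) (H : hilbert R) (u : H) : hnorm u = Num.sqrt (Qf u).
Proof. by []. Qed.

Lemma hnorm0 (R : realType) (H : hilbert R) : hnorm (0 : H) = 0.
Proof. by rewrite hnormE /Qf hip0l /= sqrtr0. Qed.

Lemma hnorm_eq0 (R : realType) (H : hilbert R) (u : H) : hnorm u = 0 -> u = 0.
Proof.
rewrite hnormE => /eqP; rewrite sqrtr_eq0 => h; apply: Qf_eq0.
by apply/eqP; rewrite eq_le h Qf_ge0.
Qed.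

Definition cn (R : realType) (c : R[i]) : R :=
  Num.sqrt (complex.Re c ^+ 2 + complex.Im c ^+ 2).

Lemma cn_ge0 (R : realType) (c : R[i]) : 0 <= cn c.
Proof. exact: sqrtr_ge0. Qed.

Lemma hnormZ (R : realType) (H : hilbert R) (c : R[i]) (u : H) :
  hnorm (c *: u) = cn c * hnorm u.
Proof.
rewrite !hnormE /cn -sqrtrM ?addr_ge0 ?sqr_ge0 //; congr Num.sqrt.
rewrite /Qf hipZ hipZr (hip_real u).
by case: c => a b /=; simpc; ring.
Qed.

Lemma sq_le (R : realType) (x y : R) : x ^+ 2 <= y ^+ 2 -> 0 <= y -> x <= y.
Proof.
move=> h y0; apply: (le_trans (ler_norm x)).
by rewrite -(ger0_norm y0) -!sqrtr_sqr ler_sqrt ?sqr_ge0.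
Qed.

Lemma hnormD (R : realType) (H : hilbert R) (u v : H) :
  hnorm (u + v) <= hnorm u + hnorm v.
Proof.
have := Qf_expand u v 1; rewrite scale1r expr1n mul1r mulr1 => E.
rewrite !hnormE E.
have hu := Qf_ge0 u; have hv := Qf_ge0 v.
have su := sqr_sqrtr hu; have sv := sqr_sqrtr hv.
have gu := sqrtr_ge0 (Qf u); have gv := sqrtr_ge0 (Qf v).
have CS := CSineq u v.
have B : Bf u v <= Num.sqrt (Qf u) * Num.sqrt (Qf v).
  apply: sq_le; last exact: mulr_ge0.
  by rewrite exprMn su sv.
rewrite -(ger0_norm (addr_ge0 gu gv)) -sqrtr_sqr ler_sqrt ?sqr_ge0 //.
nra.
Qed.


Lemma cont_affine (R : realType) (X: topologicalType) (g : X -> R) (c d : R) :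
  continuous g -> continuous (fun y => c + d * g y).
Proof.
move=> gc z.
apply: (@continuousD _ R^o _ (fun=> c) (fun y => d * g y)).
  exact: cst_continuous.
apply: (@continuousM _ _ (fun=> d) g); [exact: cst_continuous|exact: gc].
Qed.
Lemma cont_max0 (R : realType) (X: topologicalType) (g : X -> R) :
  continuous g -> continuous (fun y => Num.max 0 (g y)).
Proof.
move=> gc z.
have := @continuous_max R X (fun=> 0) g z. move=> h. apply: h. exact: cst_continuous. exact: gc.
Qed.

Lemma bump (R : realType) (X : topologicalType) (hX : hausdorff_space X)
  (lcX : locally_compact [set: X]) (x : X) (U : set X) (oU : open U) (Ux : U x) :
  exists (a : X -> R) (C : set X), [/\ continuous a, (forall y, 0 <= a y <= 1) /\ a x = 1,
     compact C, C `<=` U & forall y, a y != 0 -> C y].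
Proof.
have [P Px [cP clP]] := lcX x I.
rewrite withinET in Px.
pose W := U `&` interior P.
have oW : open W by apply: openI => //; exact: open_interior.
have Wx : W x by split => //; exact: Px.
have cr := @locally_compact_completely_regular X R lcX hX.
have sep := cr x (~` W) (open_closedC oW) (fun h => h Wx).
pose g : X -> R := Urysohn [set x] (~` W).
have gc : continuous g := @Urysohn_continuous X R _ _.
have g01 : forall y, 0 <= g y <= 1.
  move=> y; have := @Urysohn_range X R [set x] (~` W) (g y) (ex_intro2 _ _ y I erefl).
  by rewrite /= in_itv /=.
have gx : g x = 0 by apply: (@Urysohn_sub0 X R _ _ sep); exists x.
have g1 : forall y, ~ W y -> g y = 1.
  by move=> y Wy; apply: (@Urysohn_sub1 X R _ _ sep); exists y.
pose a : X -> R := fun y => Num.max 0 (1 + (-2) * g y).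
exists a, ([set y | g y <= 2^-1] `&` P); split.
- by apply: cont_max0; apply: cont_affine.
- split.
    move=> y; rewrite /a; have := g01 y; case/andP => g0 g1'.
    by rewrite le_max lexx /= ge_max ler01 /=; lra.
  by rewrite /a gx mulr0 addr0 max_r ?ler01.
- have clA : closed ([set y | g y <= 2^-1] `&` P).
    apply: closedI => //.
    have h := @preimage_closed _ _ g [set r : R | r <= 2^-1] (fun y _ => gc y) (@closed_le R 2^-1).
    exact h.
  by apply: (subclosed_compact clA cP) => ? [].
- move=> y [gy _]; have : W y by apply: contrapT => /g1 h; move: gy; rewrite /= h; lra.
  by case.
- move=> y; rewrite /a => ay; have gy : g y < 2^-1.
    by move: ay; apply: contraNT; rewrite -leNgt => h; rewrite max_l //; lra.
  have Wy : W y by apply: contrapT => /g1 h; move: gy; rewrite /= h; lra.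
  split; first by rewrite /=; lra.
  by case: Wy => _ /interior_subset.
Qed.


Lemma hnormN (R : realType) (H : hilbert R) (u : H) : hnorm (- u) = hnorm u.
Proof.
rewrite -scaleN1r hnormZ /cn /=.
by rewrite oppr0 expr0n /= addr0 sqrrN expr1n sqrtr1 mul1r.
Qed.

Lemma hnorm_subC (R : realType) (H : hilbert R) (u v : H) : hnorm (u - v) = hnorm (v - u).
Proof. by rewrite -hnormN opprB. Qed.

Lemma cnR (R : realType) (r : R) : cn ((r%:C)%C) = `|r|.
Proof. by rewrite /cn /= expr0n /= addr0 sqrtr_sqr. Qed.

Lemma cn_Re (R : realType) (c : R[i]) : complex.Re `|c| = cn c.
Proof. by rewrite normc_def. Qed.

Lemma cn_le (R : realType) (c : R[i]) : cn c <= `|complex.Re c| + `|complex.Im c|.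
Proof.
apply: sq_le; last by rewrite addr_ge0.
rewrite /cn sqr_sqrtr ?addr_ge0 ?sqr_ge0 //.
rewrite sqrrD !real_normK ?num_real //.
have := mulr_ge0 (normr_ge0 (complex.Re c)) (normr_ge0 (complex.Im c)).
nra.
Qed.

Lemma hnorm_sum (R : realType) (H : hilbert R) (I : Type) (l : seq I) (f : I -> H) :
  hnorm (\sum_(i <- l) f i) <= \sum_(i <- l) hnorm (f i).
Proof.
elim: l => [|j l IH]; first by rewrite !big_nil hnorm0.
rewrite !big_cons; apply: (le_trans (hnormD _ _)); by rewrite lerD2l.
Qed.

Lemma near_dist (R : realType) (X : topologicalType) (f : X -> R) (x : X) :
  continuous f -> forall e : R, 0 < e -> \forall y \near x, `|f x - f y| < e.
Proof. by move=> fc e e0; apply: cvgr_dist_lt => //; exact: fc. Qed.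


Lemma ReB (R : realType) (u v : R[i]) : complex.Re (u - v) = complex.Re u - complex.Re v.
Proof. by case: u; case: v. Qed.
Lemma ImB (R : realType) (u v : R[i]) : complex.Im (u - v) = complex.Im u - complex.Im v.
Proof. by case: u; case: v. Qed.

Lemma csec_sub (R : realType) (X : topologicalType) (F : cfield R X)
  (s t : forall x, fib F x) : @csec _ _ F s -> @csec _ _ F t -> @csec _ _ F (fun x => s x - t x).
Proof.
move=> hs ht.
have -> : (fun x => s x - t x) = (fun x => s x + (-1) *: t x).
  by apply: functional_extensionality_dep => x; rewrite scaleN1r.
by apply: csec_add => //; exact: csec_scale.
Qed.

Lemma C0sec_zero (R : realType) (X : topologicalType) (F : cfield R X) :
  C0sec F (fun x => 0).
Proof.
split; first exact: csec_zero.
by move=> e e0; exists set0; [exact: compact0|move=> x _; rewrite hnorm0].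
Qed.

Lemma C0sec_add (R : realType) (X : topologicalType) (F : cfield R X)
  (m n : forall x, fib F x) : C0sec F m -> C0sec F n -> C0sec F (fun x => m x + n x).
Proof.
move=> [cm vm] [cn' vn]; split; first exact: csec_add.
move=> e e0; have e2 : 0 < e / 2 by rewrite divr_gt0.
have [Km cKm hm] := vm _ e2; have [Kn cKn hn] := vn _ e2.
exists (Km `|` Kn); first exact: compactU.
move=> y nK; apply: (le_lt_trans (hnormD _ _)).
have := hm y (fun h => nK (or_introl h)); have := hn y (fun h => nK (or_intror h)).
lra.
Qed.

Lemma C0sec_scale (R : realType) (X : topologicalType) (F : cfield R X)
  (c : R[i]) (m : forall x, fib F x) : C0sec F m -> C0sec F (fun x => c *: m x).
Proof.
move=> [cm vm]; split; first exact: csec_scale.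
move=> e e0; have c1 : 0 < cn c + 1 by rewrite ltr_wpDl // cn_ge0.
have [K cK hK] := vm (e / (cn c + 1)) (divr_gt0 e0 c1).
exists K => // y nK; rewrite hnormZ.
have := hK y nK; rewrite ltr_pdivlMr // => h.
have := hnorm_ge0 (m y); have := cn_ge0 c; nra.
Qed.

Lemma C0sec_act (R : realType) (X : topologicalType) (F : cfield R X)
  (m : forall x, fib F x) (b : X -> R[i]) :
  C0sec F m -> C0 R X b -> C0sec F (fun x => b x *: m x).
Proof.
move=> [cm vm] [cRe [cIm vb]]; split.
  apply: csec_local => x e e0.
  exists (fun y => b x *: m y); first exact: csec_scale.
  pose M := hnorm (m x) + 1.
  have M0 : 0 < M by rewrite ltr_wpDl // hnorm_ge0.
  pose d := e / (2 * M).
  have d0 : 0 < d by rewrite divr_gt0 // mulr_gt0.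
  have h1 := @near_dist _ _ _ x (csec_normcont cm) 1 ltr01.
  have h2 := @near_dist _ _ _ x cRe d d0.
  have h3 := @near_dist _ _ _ x cIm d d0.
  apply: (filterS _ (filterI h1 (filterI h2 h3))) => y [k1 [k2 k3]].
  have hy : hnorm (m y) < M.
    have := ler_norm (hnorm (m y) - hnorm (m x)); rewrite distrC /M; lra.
  have cy : cn (b y - b x) < 2 * d.
    apply: (le_lt_trans (cn_le _)); rewrite ReB ImB.
    move: k2 k3; rewrite (distrC (complex.Re (b x))) (distrC (complex.Im (b x))); lra.
  rewrite -scalerBl hnormZ.
  have e2 : 2 * d * M = e by rewrite /d; field; rewrite gt_eqF.
  rewrite -e2.
  apply: (le_lt_trans (y := cn (b y - b x) * M)).
    by rewrite ler_wpM2l ?cn_ge0 // ltW.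
  by rewrite ltr_pM2r.
move=> e e0; have [Kb cKb hb] := vb e e0; have [Km cKm hm] := vm 1 ltr01.
exists (Kb `|` Km); first exact: compactU.
move=> y nK; rewrite hnormZ.
have := hb y (fun h => nK (or_introl h)); have := hm y (fun h => nK (or_intror h)).
rewrite cn_Re.
have := cn_ge0 (b y); have := hnorm_ge0 (m y); nra.
Qed.

Lemma C0_real (R : realType) (X : topologicalType) (a : X -> R) (C : set X) :
  continuous a -> compact C -> (forall y, a y != 0 -> C y) ->
  C0 R X (fun y => (a y)%:C%C).
Proof.
move=> ac cC hC; split; first exact: ac.
split; first by move=> x; exact: cst_continuous.
move=> e e0; exists C => // y nC; rewrite cn_Re cnR.
by case: (eqVneq (a y) 0) => [->|/hC //]; rewrite normr0.
Qed.


Definition ptd (X : topologicalType) (x : X) : Type := X.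
HB.instance Definition _ (X : topologicalType) (x : X) := Topological.copy (ptd x) X.
HB.instance Definition _ (X : topologicalType) (x : X) := isPointed.Build (ptd x) x.

Lemma compact_cover_pt (X : topologicalType) (x : X) (A : set X) :
  compact A -> cover_compact A.
Proof.
move=> cA; have E := @compact_cover (ptd x).
have : @cover_compact (ptd x) A by rewrite -E.
exact.
Qed.

Lemma sum_pos (R : realType) (I : eqType) (l : seq I) (G : I -> R) (j : I) :
  (forall i, 0 <= G i) -> j \in l -> 0 < G j -> 0 < \sum_(i <- l) G i.
Proof.
move=> G0; elim: l => [//|i l IH]; rewrite in_cons big_cons => /orP[/eqP <- Gj|jl Gj].
  by rewrite ltr_wpDr // sumr_ge0.
by rewrite ltr_wpDl // IH.
Qed.

Lemma cont_sum (R : realType) (X : topologicalType) (I : Type) (l : seq I) (G : I -> X -> R) :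
  (forall i, continuous (G i)) -> continuous (fun z => \sum_(i <- l) G i z).
Proof.
move=> Gc; elim: l => [|i l IH].
  have -> : (fun z => \sum_(i <- [::]) G i z) = (fun=> 0) by apply: funext => z; rewrite big_nil.
  by move=> z; exact: cst_continuous.
have -> : (fun z => \sum_(j <- i :: l) G j z) = (fun z => G i z + \sum_(j <- l) G j z).
  by apply: funext => z; rewrite big_cons.
move=> z; apply: (@continuousD _ R^o _ (G i) (fun z => \sum_(j <- l) G j z)).
  exact: Gc.
exact: IH.
Qed.

Lemma N_sum (R : realType) (X : topologicalType) (F : cfield R X)
  (N : set (forall x, fib F x)) (sN : submodule N) (I : Type) (l : seq I)
  (G : I -> forall x, fib F x) :
  (forall i, N (G i)) -> N (fun z => \sum_(i <- l) G i z).
Proof.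
case: sN => _ N0 NA _ _ GN; elim: l => [|i l IH].
  have -> : (fun z => \sum_(i <- [::]) G i z) = (fun z => 0).
    by apply: functional_extensionality_dep => z; rewrite big_nil.
  exact: N0.
have -> : (fun z => \sum_(j <- i :: l) G j z) = (fun z => G i z + \sum_(j <- l) G j z).
  by apply: functional_extensionality_dep => z; rewrite big_cons.
exact: NA.
Qed.


Lemma approx (R : realType) (X : topologicalType) (hX : hausdorff_space X)
  (lcX : locally_compact [set: X]) (F : cfield R X) (N : set (forall x, fib F x))
  (sN : submodule N) (k : forall x, fib F x) (ck : @csec _ _ F k)
  (a : X -> R) (C : set X) (x0 : X) :
  continuous a -> (forall y, 0 <= a y <= 1) -> compact C ->
  (forall y, a y != 0 -> C y) -> (forall y, C y -> fiber_closure N y (k y)) ->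
  forall e : R, 0 < e ->
  exists2 n, N n & forall y, hnorm ((a y)%:C%C *: k y - n y) <= e.
Proof.
move=> ac a01 cC aC fC e e0.
have sN' := sN; case: sN' => NC0 N0 _ _ Nact.
have pick : forall y, exists p : (forall x, fib F x) * (X -> R),
    [/\ N p.1, continuous p.2, (forall z, 0 <= p.2 z <= 1) &
     (C y -> p.2 y = 1 /\ forall z, p.2 z != 0 -> hnorm (p.1 z - k z) < e)].
  move=> y; case: (pselect (C y)) => Cy; last first.
    exists ((fun _ => 0), (fun _ => 0)); split => //=.
    - by move=> z; exact: cst_continuous.
    - by move=> z; rewrite lexx ler01.
  have [n Nn hn] := fC y Cy e e0.
  pose O := [set z | hnorm (n z - k z) < e].
  have oO : open O.
    have cn : continuous (fun z => hnorm (n z - k z)).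
      apply: csec_normcont; apply: csec_sub => //; by case: (NC0 _ Nn).
    have h := @open_comp _ _ (fun z => hnorm (n z - k z)) [set r : R | r < e]
       (fun z _ => cn z) (@open_lt R e).
    exact h.
  have Oy : O y by [].
  have [g [Cg [gc [g01 gy] _ CgO gC]]] := @bump R X hX lcX y O oO Oy.
  exists (n, g); split => //= _; split => // z /gC /CgO; exact.
have [f hf] := choice pick.
pose nn y := (f y).1; pose gg y := (f y).2.
have Pop : forall y, C y -> open [set z | 2^-1 < gg y z].
  move=> y _; have [_ gc _ _] := hf y.
  have h := @open_comp _ _ (gg y) [set r : R | 2^-1 < r] (fun z _ => gc z) (@open_gt R 2^-1).
  exact h.
have Pcov : C `<=` \bigcup_(y in C) [set z | 2^-1 < gg y z].
  move=> z Cz; exists z => //=; have [_ _ _ /(_ Cz) [gz _]] := hf z.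
  rewrite /gg gz.
  by rewrite invf_lt1 // ltr1n.
have [D' sD cD] := compact_cover_pt x0 cC Pop Pcov.
pose h y z := Num.max 0 (- 2^-1 + 1 * gg y z).
pose s z := \sum_(y <- finmap.enum_fset D') h y z.
pose phi y z := a z * h y z / s z.
pose n z := \sum_(y <- finmap.enum_fset D') (phi y z)%:C%C *: nn y z.
have h0 : forall y z, 0 <= h y z by move=> y z; rewrite /h le_max lexx.
have s0 : forall z, 0 <= s z by move=> z; rewrite /s sumr_ge0.
have sC : forall z, C z -> 0 < s z.
  move=> z Cz; have [y yD hy] := cD z Cz.
  apply: (@sum_pos _ _ _ (fun y => h y z) y) => //.
  by rewrite /h lt_max; apply/orP; right; rewrite /= in hy; lra.
have phi0 : forall y z, 0 <= phi y z.
  move=> y z; rewrite /phi divr_ge0 // mulr_ge0 //.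
  by have /andP[] := a01 z.
have hc : forall y, continuous (h y).
  by move=> y; apply: cont_max0; apply: cont_affine; have [] := hf y.
have sc : continuous s by apply: cont_sum.
have Cclosed : closed C := compact_closed hX cC.
have phic : forall y, continuous (phi y).
  move=> y z; have [sz0|sz0] := eqVneq (s z) 0.
    have nCz : ~ C z by move=> Cz; have := sC z Cz; rewrite sz0 ltxx.
    have oC : open (~` C) by exact: closed_openC.
    have nbC : nbhs z (~` C) by rewrite nbhsE; exists (~` C) => //; split.
    have pz : phi y z = 0.
      by rewrite /phi; case: (eqVneq (a z) 0) => [->|/aC //]; rewrite !mul0r.
    rewrite /continuous_at pz.
    apply: cvg_trans (near_eq_cvg (f := fun=> 0) _) (cvg_cst _).
    apply: filterS nbC => w nCw; rewrite /phi.
    by case: (eqVneq (a w) 0) => [->|/aC //]; rewrite !mul0r.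
  apply: (@continuousM _ _ (fun z => a z * h y z) (fun z => (s z)^-1)).
    by apply: (@continuousM _ _ a (h y)); [exact: ac|exact: hc].
  exact: (@continuousV _ _ s z sz0 (sc z)).
exists n.
  apply: N_sum => // y; apply: Nact; first by have [] := hf y.
  apply: (@C0_real _ _ _ C) => // z; rewrite /phi.
  by case: (eqVneq (a z) 0) => [->|/aC //]; rewrite !mul0r eqxx.
move=> z.
have sumphi : \sum_(y <- finmap.enum_fset D') phi y z = a z.
  have [sz0|sz0] := eqVneq (s z) 0.
    have nCz : ~ C z by move=> Cz; have := sC z Cz; rewrite sz0 ltxx.
    have az : a z = 0 by case: (eqVneq (a z) 0) => [//|/aC //].
    by rewrite big1 // => y _; rewrite /phi az !mul0r.
  rewrite /phi -mulr_suml -mulr_sumr -/(s z) mulfK //.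
have E : (a z)%:C%C *: k z - n z = \sum_(y <- finmap.enum_fset D') (phi y z)%:C%C *: (k z - nn y z).
  rewrite -sumphi rmorph_sum scaler_suml /n -sumrB.
  by apply: eq_bigr => y _; rewrite scalerBr.
rewrite E; apply: (le_trans (hnorm_sum _ _)).
apply: (@le_trans _ _ (\sum_(y <- finmap.enum_fset D') phi y z * e)).
  rewrite big_seq [X in _ <= X]big_seq; apply: ler_sum => y yD.
  rewrite hnormZ cnR ger0_norm //.
  have [->|pn0] := eqVneq (phi y z) 0; first by rewrite !mul0r.
  rewrite ler_wpM2l // ltW // hnorm_subC.
  have Cy : C y by exact/set_mem/sD.
  have [_ _ _ /(_ Cy) [_ hy]] := hf y; apply: hy.
  move: pn0; rewrite /phi; apply: contraNneq => g0.
  by rewrite /h /gg g0 mulr0 addr0 max_l ?mulr0 ?mul0r // lerNl oppr0 invr_ge0 ler0n.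
rewrite -mulr_suml sumphi; have /andP[_ a1] := a01 z.
by rewrite -[X in _ <= X]mul1r ler_wpM2r // ltW.
Qed.


Lemma open_pos (R : realType) (X : topologicalType) (F : cfield R X)
  (k : forall x, fib F x) : @csec _ _ F k -> open [set y | 0 < hnorm (k y)].
Proof.
move=> ck; have cn := csec_normcont ck.
have h := @open_comp _ _ (fun z => hnorm (k z)) [set r : R | 0 < r]
   (fun z _ => cn z) (@open_gt R 0).
exact h.
Qed.

Lemma hnorm_gt0 (R : realType) (H : hilbert R) (u : H) : (0 < hnorm u) <-> u != 0.
Proof.
split => [h|h]; first by apply/eqP => u0; move: h; rewrite u0 hnorm0 ltxx.
rewrite lt_def hnorm_ge0 andbT; apply/eqP => /hnorm_eq0 u0; by rewrite u0 eqxx in h.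
Qed.

Lemma rc0 (R : realType) : ((0 : R)%:C)%C = 0. Proof. by []. Qed.
Lemma rc1 (R : realType) : ((1 : R)%:C)%C = 1. Proof. by []. Qed.

Theorem mainTheorem5 (R : realType) (X : topologicalType)
  (hX : hausdorff_space X) (lcX : locally_compact [set: X])
  (F : cfield R X) (N : set (forall x, fib F x)) (hN : closed_submodule N) :
  essential N <->
  (forall m, C0sec F m ->
     nowhere_dense [set x | ~ fiber_closure N x (m x)]).
Proof.
have [sN Ncl] := hN.
have sN' := sN; case: sN' => NC0 N0 NA NZ Nact.
split.
- move=> ess m Cm; rewrite /nowhere_dense -subset0 => x Ix.
  set Y := [set x | ~ fiber_closure N x (m x)] in Ix.
  move: Ix; rewrite /interior nbhsE => -[U [oU Ux] UY].
  have [x0 [Yx0 Ux0]] := UY x Ux U (open_nbhs_nbhs (conj oU Ux)).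
  have mx0 : m x0 != 0.
    apply/eqP => m0; apply: Yx0 => e e0; exists (fun _ => 0) => //.
    by rewrite m0 subr0 hnorm0.
  have [a [C [ac [a01 ax0] cC CU aC]]] := @bump R X hX lcX x0 U oU Ux0.
  pose K := [set k : forall x, fib F x | [/\ C0sec F k, (forall y, ~ U y -> k y = 0) &
              forall y, exists c : R[i], k y = c *: m y]].
  have sK : submodule K.
    split.
    - by move=> k [].
    - split; [exact: C0sec_zero|by []|by move=> y; exists 0; rewrite scale0r].
    - move=> k1 k2 [C1 z1 s1] [C2 z2 s2]; split; first exact: C0sec_add.
        by move=> y nU; rewrite z1 // z2 // addr0.
      move=> y; have [c1 ->] := s1 y; have [c2 ->] := s2 y.
      by exists (c1 + c2); rewrite scalerDl.
    - move=> c k1 [C1 z1 s1]; split; first exact: C0sec_scale.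
        by move=> y nU; rewrite z1 // scaler0.
      by move=> y; have [c1 ->] := s1 y; exists (c * c1); rewrite scalerA.
    - move=> k1 b [C1 z1 s1] Cb; split; first exact: C0sec_act.
        by move=> y nU; rewrite z1 // scaler0.
      by move=> y; have [c1 ->] := s1 y; exists (b y * c1); rewrite scalerA.
  have Kk0 : K (fun y => (a y)%:C%C *: m y).
    split.
    - by apply: C0sec_act => //; exact: (@C0_real _ _ _ C).
    - move=> y nU; case: (eqVneq (a y) 0) => [->|/aC /CU //].
      by rewrite rc0 scale0r.
    - by move=> y; exists (a y)%:C%C.
  have [k [Nk [Ck zk sk] [x1 kx1]]] : exists k, [/\ N k, K k & exists x, k x != 0].
    apply: ess => //; exists (fun y => (a y)%:C%C *: m y) => //.
    by exists x0; rewrite ax0 rc1 scale1r.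
  have Ux1 : U x1 by apply: contrapT => /zk; apply/eqP.
  pose W := U `&` [set y | 0 < hnorm (k y)].
  have oW : open W by apply: openI => //; apply: open_pos; case: Ck.
  have Wx1 : W x1 by split => //=; apply/hnorm_gt0.
  have [y [Yy [Uy ky]]] := UY x1 Ux1 W (open_nbhs_nbhs (conj oW Wx1)).
  apply: Yy; have [c kyc] := sk y.
  have c0 : c != 0 by apply/eqP => c0; move: ky; rewrite /= kyc c0 scale0r hnorm0 ltxx.
  move=> e e0; exists (fun z => c^-1 *: k z); first exact: NZ.
  by rewrite kyc scalerA mulVf // scale1r subrr hnorm0.
- move=> H K sK [k Kk [x0 kx0]].
  have sK' := sK; case: sK' => KC0 K0 KA KZ Kact.
  have Ck := KC0 k Kk; have ck : @csec _ _ F k by case: Ck.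
  set Y := [set x | ~ fiber_closure N x (k x)].
  have nd := H k Ck; rewrite /nowhere_dense -/Y in nd.
  pose O := [set y | 0 < hnorm (k y)].
  have oO : open O := open_pos ck.
  have Ox0 : O x0 by apply/hnorm_gt0.
  have [x1 [Ox1 nY]] : exists x1, O x1 /\ ~ closure Y x1.
    apply: contrapT => hne.
    have OY : O `<=` closure Y.
      by move=> y Oy; apply: contrapT => nc; apply: hne; exists y.
    have : interior (closure Y) x0.
      by rewrite /interior; apply: (filterS OY); exact: open_nbhs_nbhs.
    by rewrite nd.
  pose V := O `&` ~` closure Y.
  have oV : open V by apply: openI => //; apply: closed_openC; exact: closed_closure.
  have Vx1 : V x1 by [].
  have [a [C [ac [a01 ax1] cC CV aC]]] := @bump R X hX lcX x1 V oV Vx1.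
  have C0a : C0 R X (fun y => (a y)%:C%C) by exact: (@C0_real _ _ _ C).
  have Kt : K (fun y => (a y)%:C%C *: k y) by exact: Kact.
  exists (fun y => (a y)%:C%C *: k y); split => //.
    apply: Ncl; first exact: KC0.
    move=> e e0; apply: (@approx R X hX lcX F N sN k ck a C x1) => //.
    move=> y /CV [_ nYy]; apply: contrapT => nf; apply: nYy.
    by apply: subset_closure.
  exists x1; rewrite ax1 rc1 scale1r; exact/hnorm_gt0.
Qed.
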